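(* For every $1$-Sperner hypergraph ${\cal H}=(V,{\cal E})$ with $V\neq\emptyset$, we have $|{\cal E}|\le|V|$.
   Context: A hypergraph ${\cal H}=(V,{\cal E})$ consists of a finite vertex set $V$ and a set ${\cal E}$ of subsets of $V$. It is $1$-Sperner if every two distinct hyperedges $e,f$ satisfy $\min\{|e\setminus f|,|f\setminus e|\}=1$. *)

(* Defs.v *)
From mathcomp Require Import all_boot.
Set Implicit Arguments. Unset Strict Implicit. Unset Printing Implicit Defensive.

(* A hypergraph on the finite vertex type V is a set E of subsets of V
   (hyperedges); the vertex set is all of V. *)
Definition one_sperner (V : finType) (E : {set {set V}}) : Prop :=
  forall e f, e \in E -> f \in E -> e != f ->
    minn #|e :\: f| #|f :\: e| = 1.

(* Main.v *)
Require Import Defs.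
From mathcomp Require Import all_boot.
From mathcomp Require Import zify.
Set Implicit Arguments. Unset Strict Implicit. Unset Printing Implicit Defensive.

Section S.
Variable V : finType.
Implicit Types (E : {set {set V}}) (e f a b m S : {set V}).

Lemma sub0 e f : e \subset f -> #|e :\: f| = 0.
Proof. by move=> h; apply/eqP; rewrite cards_eq0 setD_eq0. Qed.

Lemma card1_eq (D : {set V}) x y : #|D| = 1 -> x \in D -> y \in D -> x = y.
Proof. by move/eqP/cards1P=> [u ->]; rewrite !inE => /eqP-> /eqP->. Qed.

Lemma two_le (D : {set V}) x y : x \in D -> y \in D -> x != y -> 1 < #|D|.
Proof.
move=> hx hy nxy; have: [set x; y] \subset D by rewrite subUset !sub1set hx hy.
by move/subset_leq_card; rewrite cards2 nxy.
Qed.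

Lemma good_exists E : one_sperner E -> 1 < #|E| ->
  exists z, (exists2 m, m \in E & z \in m) /\
   (forall a b, a \in E -> b \in E -> z \in a -> z \notin b ->
      forall x, x \in a -> x != z -> x \in b).
Proof.
move=> H hE.
have /card_gt0P [e0 he0] : 0 < #|E| by lia.
have [m [hm mmin]] : exists m : {set V}, m \in E /\ forall e, e \in E -> #|m| <= #|e|.
  by case: (arg_minnP (fun e => #|e|) he0) => m hm mmin; exists m.
have hE1 : 0 < #|E :\ m|.
 by move: hE; rewrite (cardsD1 m E) hm /= add1n.
have /card_gt0P [e1 he1] := hE1.
have [es [hes esmax]] : exists es : {set V}, es \in E :\ m /\
    forall e, e \in E :\ m -> #|e :\: m| <= #|es :\: m|.
  by case: (arg_maxnP (fun e => #|e :\: m|) he1) => es hes esmax; exists es.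
move: hes; rewrite !inE => /andP [nesm hesE].
have F1 : forall e, e \in E -> e != m -> #|m :\: e| = 1.
  move=> e he nem; have h := H e m he hm nem.
  have := mmin e he; have := cardsID e m; have := cardsID m e.
  rewrite setIC; lia.
have F1' : forall e, e \in E -> e != m -> forall x y, x \in m -> x \notin e ->
    y \in m -> y \notin e -> x = y.
  move=> e he nem x y xm xe ym ye; apply: (card1_eq (F1 e he nem));
  by rewrite inE ?xm ?xe ?ym ?ye.
have /eqP/cards1P [z hz] := F1 es hesE nesm.
have : z \in m :\: es by rewrite hz set11.
rewrite inE => /andP[zes zm].
exists z; split; first by exists m.
move=> a b ha hb za zb x xa xz; apply/negPn/negP => xb.
have bm : b != m by apply/eqP => bm; rewrite bm zm in zb.
have xm : x \notin m.
  apply/negP => xm; have := F1' b hb bm x z xm xb zm zb; by move/eqP: xz.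
have am : a != m by apply/eqP => am; move: xm; rewrite -am xa.
have /eqP/cards1P [w hw] := F1 a ha am.
have : w \in m :\: a by rewrite hw set11.
rewrite inE => /andP[wa wm].
have wz : w != z by apply/eqP => wz; rewrite wz za in wa.
have wb : w \in b.
  apply/negPn/negP => wb; by rewrite (F1' b hb bm w z wm wb zm zb) eqxx in wz.
have ab : a != b by apply/eqP => ab; rewrite ab in za; rewrite za in zb.
have hab := H a b ha hb ab.
have t2 : 1 < #|a :\: b|.
  apply: (two_le (x:=z) (y:=x)); rewrite ?inE ?za ?zb ?xa ?xb //.
  by rewrite eq_sym.
have bsa : #|b :\: a| = 1 by clear -hab t2; lia.
have claim : forall y, y \in b -> y \notin m -> y \in a.
  move=> y yb ym; apply/negPn/negP => ya.
  have ey := card1_eq (x:=y) (y:=w) bsa.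
  by move: ym; rewrite ey ?inE ?yb ?ya ?wb ?wa ?wm.
have aEm : a \in E :\ m by rewrite !inE am ha.
case: (eqVneq b es) => [bes | nbes].
  have := esmax a aEm; rewrite -bes.
  have: b :\: m \proper a :\: m.
    apply/properP; split.
      apply/subsetP => y; rewrite !inE => /andP[ym yb]; by rewrite ym claim.
    by exists x; rewrite !inE ?xm ?xa ?xb.
  move/proper_card; clear; lia.
have aes : a != es by apply/eqP => e; rewrite e in za; rewrite za in zes.
have Has := H a es ha hesE aes.
have wes : w \in es.
  apply/negPn/negP => wes; by rewrite (F1' es hesE nesm w z wm wes zm zes) eqxx in wz.
have sub_ao : forall y, y \in a -> y \notin m -> y \in es.
  have : #|a :\: es| = 1 \/ #|es :\: a| = 1 by clear -Has; lia.
  case=> h1.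
    move=> y ya ym; apply/negPn/negP=> yes.
    have ey := card1_eq (x:=y) (y:=z) h1.
    by move: ym; rewrite ey ?inE ?ya ?yes ?za ?zes ?zm.
  have esa : forall y, y \in es -> y \notin m -> y \in a.
    move=> y yb ym; apply/negPn/negP => ya.
    have ey := card1_eq (x:=y) (y:=w) h1.
    by move: ym; rewrite ey ?inE ?yb ?ya ?wes ?wa ?wm.
  have sub : es :\: m \subset a :\: m.
    apply/subsetP => y; rewrite !inE => /andP[ym yb]; by rewrite ym esa.
  have eqs : es :\: m == a :\: m by rewrite eqEcard sub esmax.
  move=> y ya ym; have : y \in a :\: m by rewrite !inE ya ym.
  by rewrite -(eqP eqs) !inE => /andP[_ ->].
have bsub : b \subset es.
  apply/subsetP => y yb; case ym: (y \in m).
    apply/negPn/negP => yes; have e := F1' es hesE nesm y z ym yes zm zes.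
    by move: zb; rewrite -e yb.
  by apply: sub_ao; [apply: claim|]; rewrite ?ym.
by have := H b es hb hesE nbes; rewrite (sub0 bsub) min0n.
Qed.


Lemma main n : forall S E, #|S| <= n -> (forall e, e \in E -> e \subset S) ->
  one_sperner E -> #|E| <= maxn #|S| 1.
Proof.
elim: n => [|n IH] S E hS hsub H; (case: (leqP #|E| 1) => hE; first by clear -hE; lia);
  have [z [[m hm zm] G]] := good_exists H hE;
  have zS : z \in S by exact: (subsetP (hsub m hm)).
  have : 0 < #|S| by apply/card_gt0P; exists z.
  by clear -hS; lia.
pose P := [set e : {set V} | z \in e].
pose A := E :&: P. pose B := E :\: P.
have hAB : #|A| + #|B| = #|E| := cardsID P E.
have inA : forall a, (a \in A) = (a \in E) && (z \in a) by move=> a; rewrite !inE andbC.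
have inB : forall b, (b \in B) = (b \in E) && (z \notin b) by move=> b; rewrite !inE andbC.
pose U := \bigcup_(a in A) (a :\ z).
pose W := (S :\ z) :\: U.
have UB : forall b y, b \in B -> y \in U -> y \in b.
  move=> b y; rewrite inB => /andP[hb zb] /bigcupP [a]; rewrite inA => /andP[ha za].
  rewrite !inE => /andP[yz ya]. exact: G a b ha hb za zb y ya yz.
have US : U \subset S :\ z.
  apply/bigcupsP => a; rewrite inA => /andP[ha _]. apply: setSD. exact: hsub.
pose A' := [set a :\ z | a in A].
pose B' := [set b :\: U | b in B].
have cA : #|A'| = #|A|.
  apply: card_in_imset => a1 a2; rewrite !inA => /andP[_ z1] /andP[_ z2] e.
  apply/setP => y; have := (iffRL (setP _ _) e) y; rewrite /= !inE.
  case: (eqVneq y z) => [->|yz]; first by rewrite z1 z2.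
  by move=> h; exact: h.
have cB : #|B'| = #|B|.
  apply: card_in_imset => b1 b2 h1 h2 e; apply/setP => y.
  have := (iffRL (setP _ _) e) y; rewrite /= !inE.
  case yU: (y \in U); last by move=> h; exact: h.
  by rewrite (UB b1 y h1 yU) (UB b2 y h2 yU).
have HA' : one_sperner A'.
  move=> e f /imsetP[a1 h1 ->] /imsetP[a2 h2 ->] ne.
  have n12 : a1 != a2 by apply: contra_neq ne => ->.
  move: h1 h2; rewrite !inA => /andP[h1 z1] /andP[h2 z2].
  have eq : forall a a', z \in a' -> (a :\ z) :\: (a' :\ z) = a :\: a'.
    move=> a a' za'; apply/setP => y; rewrite !inE.
    case: (eqVneq y z) => [->|yz]; first by rewrite ?eqxx za' /=.
    by [] .
  rewrite !eq //. exact: H.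
have HB' : one_sperner B'.
  move=> e f /imsetP[b1 h1 ->] /imsetP[b2 h2 ->] ne.
  have n12 : b1 != b2 by apply: contra_neq ne => ->.
  have eq : forall b b', b' \in B -> (b :\: U) :\: (b' :\: U) = b :\: b'.
    move=> b b' hb'; apply/setP => y; rewrite !inE.
    case yU: (y \in U); last by [].
    by rewrite (UB b' y hb' yU).
  rewrite !eq //. move: h1 h2; rewrite !inB => /andP[h1 _] /andP[h2 _]. exact: H.
have sA' : forall e, e \in A' -> e \subset U.
  move=> e /imsetP[a ha ->]. exact: (bigcup_sup a ha).
have sB' : forall e, e \in B' -> e \subset W.
  move=> e /imsetP[b hb ->]; move: (hb); rewrite inB => /andP[hbE zb].
  apply/subsetP => y; rewrite !inE => /andP[yU yb]; rewrite yU /=.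
  rewrite (subsetP (hsub b hbE) y yb) andbT.
  by apply: contraNneq zb => <-.
have cS : #|S| = 1 + #|S :\ z| by rewrite (cardsD1 z S) zS.
have cSz : #|S :\ z| = #|U| + #|W|.
  by rewrite -(cardsID U (S :\ z)) (setIidPr US).
have hA := IH U A' ltac:(clear -cS cSz hS; lia) sA' HA'.
have hB := IH W B' ltac:(clear -cS cSz hS; lia) sB' HB'.
have fin : ~ (#|U| = 0 /\ #|W| = 0 /\ 0 < #|A| /\ 0 < #|B|).
  move=> [U0 [W0 [/card_gt0P [a ha] /card_gt0P [b hb]]]].
  move: (ha) (hb); rewrite inA inB => /andP[haE za] /andP[hbE zb].
  have ba : b != a by apply/eqP => ba; move: zb; rewrite ba za.
  have sba : b \subset a.
    apply/subsetP => y yb. have : y \in W.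
      rewrite !inE (subsetP (hsub b hbE) y yb) andbT.
      apply/andP; split.
        by apply/negP => yU; move/eqP: U0; rewrite cards_eq0 => /eqP U0;
          move: yU; rewrite U0 inE.
      by apply: contraNneq zb => <-.
    by move/eqP: W0; rewrite cards_eq0 => /eqP ->; rewrite inE.
  by have := H b a hbE haE ba; rewrite (sub0 sba) min0n.
clear -hAB cA cB hA hB cS cSz fin. move: hAB cA cB hA hB cS cSz fin.
move: #|A'| #|B'| #|A| #|B| #|E| #|S| #|S:\z| #|U| #|W| => a1 b1 c1 d1 e1 s1 t1 u1 w1 h1 h2 h3 h4 h5 h6 h7 h8.
clear -h1 h2 h3 h4 h5 h6 h7 h8. lia.
Qed.

End S.

Theorem corollary16 (V : finType) (E : {set {set V}}) :
  0 < #|V| -> one_sperner E -> #|E| <= #|V|.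
Proof.
move=> hV H.
have := @main V #|[set: V]| [set: V] E (leqnn _) (fun e _ => subsetT e) H.
rewrite cardsT => h; apply: leq_trans h _.
by rewrite geq_max leqnn hV.
Qed.
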